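(* Let $\delta\le\frac14$ and let $\mathcal{I}$ be a $\delta$-ONI instance with $n$ agents and $|N^1_1|\le n\left(\frac14-\delta\right)/\left(\frac14+\frac\delta3\right)$. Then every agent $i\in N^1_2$ receives a bag of value at least $\left(\frac34+\delta\right)\mathrm{MMS}_i$ at the end of Algorithm $\mathtt{approxMMS1}(\mathcal{I},\delta)$.
   Context: Instance: agents $[n]$, goods $[m]$, additive valuations; goods with index larger than $m$ are dummy goods of value 0; $\mathrm{MMS}_i$ is the max over partitions of the goods into $n$ bundles of the minimum bundle value for $i$. Ordered: $v_i(1)\ge\dots\ge v_i(m)$ for all $i$. Normalized: every agent $i$ has an MMS partition with all $n$ bundles of value exactly 1 to $i$. $\alpha$-irreducible: for every $i$, $v_i(1)<\alpha$, $v_i(\{2n-1,2n,2n+1\})<\alpha$, $v_i(\{3n-2,\dots,3n+1\})<\alpha$, $v_i(\{1,2n+1\})<\alpha$. $\delta$-ONI: ordered, normalized, $(3/4+\delta)$-irreducible. $B_k=\{k,2n-k+1\}$ ($k\in[n]$); $N^1=\{i:v_i(B_k)\le1\ \forall k\}$; $N^1_1=\{i\in N^1:v_i(2n+1)\ge\frac14-5\delta\}$; $N^1_2=N^1\setminus N^1_1$. Algorithm $\mathtt{approxMMS1}(\mathcal{I},\delta)$: $\alpha=3/4+\delta$, bags $B_1,\dots,B_n$. Phase 1: while some unassigned agent $i$ and unassigned bag $B$ have $v_i(B)\ge\alpha$, assign such $B$ to an agent valuing it at least $\alpha$, choosing an agent of $N^1_1$ whenever one qualifies. Phase 2: process remaining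 bags one by one; for the current bag $B$, while no unassigned agent values it at least $\alpha$, add an arbitrary unused good with index $>2n$; then assign $B$ to an unassigned agent valuing it at least $\alpha$, preferring $N^1_1$. (If a good must be added but none is left, the algorithm stops.) *)

(* Defs.v *)
From HB Require Import structures.
From mathcomp Require Import all_boot all_order all_algebra.
Set Implicit Arguments. Unset Strict Implicit. Unset Printing Implicit Defensive.
Import Order.TTheory GRing.Theory Num.Theory.
Local Open Scope ring_scope.

Section Instance.
Variables (R : realFieldType) (n m : nat).

(* Goods are natural numbers with the paper's 1-based
   indexing: goods 1..m are real goods, every other index is a dummy good
   of value 0.  The valuation of agent i is [v i : nat -> R] (only its
   values on 1..m matter). *)
Variable v : 'I_n -> nat -> R.

Definition gval (i : 'I_n) (g : nat) : R :=
  if (0 < g <= m)%N then v i g else 0.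

(* additive value of a bag (bags are duplicate-free lists of goods) *)
Definition bval (i : 'I_n) (B : seq nat) : R := \sum_(g <- B) gval i g.

Definition nonneg_vals : Prop := forall i g, 0 <= v i g.

(* a partition of the goods [m] into n bundles: good o.+1 goes to bundle f o *)
Definition bundle_val (i : 'I_n) (f : {ffun 'I_m -> 'I_n}) (k : 'I_n) : R :=
  \sum_(o : 'I_m | f o == k) gval i o.+1.

(* minimum bundle value (the total value bval i (iota 1 m) is an upper bound
   of every bundle value, hence a neutral start for the min) *)
Definition min_bundle (i : 'I_n) (f : {ffun 'I_m -> 'I_n}) : R :=
  \big[Num.min/bval i (iota 1 m)]_(k : 'I_n) bundle_val i f k.

Definition MMS (i : 'I_n) : R :=
  \big[Num.max/0]_(f : {ffun 'I_m -> 'I_n}) min_bundle i f.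

Definition ordered : Prop :=
  forall i g g', (1 <= g)%N -> (g <= g')%N -> (g' <= m)%N -> gval i g' <= gval i g.

Definition normalized : Prop :=
  forall i, exists f : {ffun 'I_m -> 'I_n},
    min_bundle i f = MMS i /\ forall k, bundle_val i f k = 1.

Definition irreducible (alpha : R) : Prop :=
  forall i,
    [/\ gval i 1 < alpha,
        bval i [:: (2 * n - 1)%N; (2 * n)%N; (2 * n).+1] < alpha,
        bval i (iota (3 * n - 2) 4) < alpha
      & bval i [:: 1%N; (2 * n).+1] < alpha].

Definition alpha_of (delta : R) : R := 3 / 4 + delta.

Definition ONI (delta : R) : Prop :=
  [/\ ordered, normalized & irreducible (alpha_of delta)].

(* bag B_{k+1} = {k+1, 2n-(k+1)+1} for k : 'I_n *)
Definition Bk (k : 'I_n) : seq nat := [:: k.+1; (2 * n - k)%N].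

Definition inN1 (i : 'I_n) : bool := [forall k, bval i (Bk k) <= 1].

Definition N11 (delta : R) : {set 'I_n} :=
  [set i | inN1 i && (1 / 4 - 5 * delta <= gval i (2 * n).+1)].

Definition N12 (delta : R) : {set 'I_n} :=
  [set i | inN1 i && ~~ (1 / 4 - 5 * delta <= gval i (2 * n).+1)].

(* bags : contents of bag B_{k+1};  owner k = Some i : bag k assigned to agent i;
   phase2 : whether Phase 2 has started; cur : bag currently processed in Phase 2 *)
Record state := State {
  bags : 'I_n -> seq nat;
  owner : 'I_n -> option 'I_n;
  phase2 : bool;
  cur : option 'I_n }.

Definition init_state : state := State Bk (fun _ => None) false None.

Definition agent_free (s : state) (i : 'I_n) : Prop := forall k, owner s k <> Some i.

Definition unused (s : state) (g : nat) : Prop :=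
  (2 * n < g <= m)%N /\ forall k, g \notin bags s k.

Definition pref (delta : R) (s : state) (B : seq nat) (i : 'I_n) : Prop :=
  i \in N11 delta \/
  ~ (exists j, [/\ j \in N11 delta, agent_free s j & alpha_of delta <= bval j B]).

Definition assign (o : 'I_n -> option 'I_n) (k i : 'I_n) : 'I_n -> option 'I_n :=
  fun k' => if k' == k then Some i else o k'.

Definition add_good (b : 'I_n -> seq nat) (k : 'I_n) (g : nat) : 'I_n -> seq nat :=
  fun k' => if k' == k then rcons (b k) g else b k'.

Inductive step (delta : R) : state -> state -> Prop :=
| p1_assign s k i :
    ~~ phase2 s -> owner s k = None -> agent_free s i ->
    alpha_of delta <= bval i (bags s k) -> pref delta s (bags s k) i ->
    step delta s (State (bags s) (assign (owner s) k i) false None)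
| p1_end s :
    ~~ phase2 s ->
    (forall k i, owner s k = None -> agent_free s i -> bval i (bags s k) < alpha_of delta) ->
    step delta s (State (bags s) (owner s) true None)
| p2_select s k :
    phase2 s -> cur s = None -> owner s k = None ->
    step delta s (State (bags s) (owner s) true (Some k))
| p2_add s k g :
    phase2 s -> cur s = Some k ->
    (forall i, agent_free s i -> bval i (bags s k) < alpha_of delta) ->
    unused s g ->
    step delta s (State (add_good (bags s) k g) (owner s) true (Some k))
| p2_assign s k i :
    phase2 s -> cur s = Some k -> agent_free s i ->
    alpha_of delta <= bval i (bags s k) -> pref delta s (bags s k) i ->
    step delta s (State (bags s) (assign (owner s) k i) true None).

Inductive reach (delta : R) : state -> state -> Prop :=
| reach_refl s : reach delta s s
| reach_step s s' s'' : step delta s s' -> reach delta s' s'' -> reach delta s s''.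

(* the algorithm has ended (normally, or stopped because no good was left) *)
Definition final (delta : R) (s : state) : Prop := forall s', ~ step delta s s'.

End Instance.

(* Main.v *)
Require Import Defs.
From HB Require Import structures.
From mathcomp Require Import all_boot all_order all_algebra.
From mathcomp Require Import zify ring lra.
From Stdlib Require Import Classical.
Import Order.TTheory GRing.Theory Num.Theory.
Local Open Scope ring_scope.

Lemma cover_sum (R : realFieldType) (f : nat -> R) (N : nat) :
  (forall g, 0 <= f g) -> forall b : seq nat,
  \sum_(g < N) (nat_of_ord g \in b)%:R * f g <= \sum_(x <- b) f x.
Proof.
move=> f0; elim=> [|x b IH].
  by rewrite big_nil big1 // => g _; rewrite in_nil mul0r.
rewrite big_cons.
apply: le_trans (_ : \sum_(g < N) ((g == x :> nat)%:R * f g + (nat_of_ord g \in b)%:R * f g) <= _).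
  apply: ler_sum => g _; rewrite in_cons -mulrDl ler_wpM2r //.
  by case: (g == x :> nat); case: (nat_of_ord g \in b) => /=; rewrite ?addr0 ?add0r // -natrD ler_nat.
rewrite big_split /= lerD //.
case: (ltnP x N) => [xN|xN].
  rewrite (bigD1 (Ordinal xN)) //= eqxx mul1r big1 ?addr0 // => g gx.
  case: eqP => [gx2|]; last by rewrite mul0r.
  by move: gx; rewrite (_ : g = Ordinal xN) ?eqxx //; apply: val_inj.
rewrite big1 // => g _; case: eqP => [gx|]; last by rewrite mul0r.
by move: (ltn_ord g); rewrite gx ltnNge xN.
Qed.

Lemma bigmin1 (R : realFieldType) p (x : R) :
  (0 < p)%N -> 1 <= x -> \big[Num.min/x]_(k < p) (1:R) = 1.
Proof.
case: p => // p _ x1; elim: p => [|p IH]; rewrite big_ord_recl /=.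
  by rewrite big_ord0 min_l.
by rewrite IH min_l.
Qed.

Set Implicit Arguments.

Section Main.
Variables (R : realFieldType) (n m : nat) (v : 'I_n -> nat -> R) (delta : R) (i : 'I_n).
Hypotheses (Hd : delta <= 1/4) (Hnn : nonneg_vals v) (Honi : ONI m v delta)
  (Hi : i \in N12 m v delta).

Local Notation alpha := (alpha_of delta).

Lemma gval_ge0 j g : 0 <= gval m v j g.
Proof. by rewrite /gval; case: ifP. Qed.

Lemma total j : \sum_(g < m.+1) gval m v j g = n%:R.
Proof.
have [_ Hn _] := Honi.
have [f [_ Hf]] := Hn j.
rewrite big_ord_recl /= {1}/gval /= add0r.
under eq_bigr do rewrite /bump leq0n add1n.
rewrite (partition_big (fun o => f o) predT) //=.
rewrite (eq_bigr (fun _ => 1)); first by rewrite sumr_const card_ord.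
by move=> k _; rewrite -(Hf k).
Qed.

Lemma total' j : bval m v j (iota 1 m) = n%:R.
Proof.
rewrite -(total j) -(big_mkord xpredT (gval m v j)) big_ltn // {2}/gval /= add0r.
by rewrite /index_iota subn1.
Qed.

Lemma n0 : (0 < n)%N.
Proof. exact: (leq_ltn_trans (leq0n i) (ltn_ord i)). Qed.

Lemma MMS1 : MMS m v i = 1.
Proof.
have [_ Hn _] := Honi.
have [f [<- Hf]] := Hn i.
rewrite /min_bundle (eq_bigr (fun _ => 1)) //.
apply: bigmin1; first exact: n0.
by rewrite total' ler1n n0.
Qed.

Lemma gadd g : (2 * n < g <= m)%N -> gval m v i g <= 1 - alpha.
Proof.
move=> /andP[g1 g2].
have [ord _ irr] := Honi.
have h1 := ord i (2 * n).+1 g isT g1 g2.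
have n1 := n0.
move: Hi; rewrite inE => /andP[_]; rewrite -ltNge => h2.
have [_ h3 _ _] := irr i.
move: h3; rewrite /bval !big_cons big_nil addr0 => h3.
have h4 := ord i (2 * n - 1)%N (2 * n)%N ltac:(lia) ltac:(lia) ltac:(lia).
have h5 := ord i (2 * n)%N (2 * n).+1 ltac:(lia) ltac:(lia) ltac:(lia).
have h6 : 0 <= gval m v i (2 * n).+1 by apply: gval_ge0.
rewrite /alpha_of in h3 *.
case: (lerP 0 delta) => hd; lra.
Qed.

Definition Inv (s : state n) : Prop :=
 [/\ (forall g, (0 < g <= 2 * n)%N -> exists k, g \in bags s k),
     (forall k1 k2 j, owner s k1 = Some j -> owner s k2 = Some j -> k1 = k2),
     (forall k, cur s = Some k -> owner s k = None),
     (forall k j, owner s k = Some j -> alpha <= bval m v j (bags s k)) &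
     (agent_free s i -> forall k, bval m v i (bags s k) <= 1)].

Lemma Inv_init : Inv (init_state n).
Proof.
split => //=.
- move=> g /andP[g0 g2]; case: (leqP g n) => gn.
    have hk : (g.-1 < n)%N by lia.
    exists (Ordinal hk); rewrite /Bk /= inE prednK // eqxx //.
  have hk : (2 * n - g < n)%N by lia.
  exists (Ordinal hk); rewrite /Bk /= !inE; apply/orP; right; apply/eqP; lia.
- move=> _; move: Hi; rewrite inE => /andP[/forallP H _] k; exact: H k.
Qed.

Lemma assign_inv s k j : Inv s -> owner s k = None -> agent_free s j ->
  alpha <= bval m v j (bags s k) ->
  forall ph, Inv (State (bags s) (assign (owner s) k j) ph None).
Proof.
case=> Hc Hinj Hcur Hown Hfree ok fj aj ph; split => //=.
- move=> k1 k2 j'; rewrite /assign; case: (eqVneq k1 k) => [->|ne1]; case: (eqVneq k2 k) => [->|ne2] // H1 H2.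
  all: try exact: Hinj H1 H2.
    by move: H1 => [e]; rewrite -e in H2; case: (fj _ H2).
  by move: H2 => [e]; rewrite -e in H1; case: (fj _ H1).


- move=> k' j'; rewrite /assign; case: (eqVneq k' k) => [-> [<-]|_] //; exact: Hown.
- move=> fi k'; apply: Hfree => k2.
  have := fi k2; rewrite /assign /=; case: (eqVneq k2 k) => [-> _|_ //]; by rewrite ok.
Qed.

Lemma step_inv s s' : step m v delta s s' -> Inv s -> Inv s'.
Proof.
case => {s s'}.
- move=> s k j _ ok fj aj _ I; exact: assign_inv.
- by move=> s _ _ [Hc Hinj Hcur Hown Hfree]; split.
- by move=> s k _ _ ok [Hc Hinj Hcur Hown Hfree]; split => //= k' [<-].
- move=> s k g _ ck Hall [gr gu] [Hc Hinj Hcur Hown Hfree].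
  have okk := Hcur k ck; split => //=.
  + move=> g0 /Hc [k0 Hk0]; exists k0; rewrite /add_good; case: eqP => [e|//].
    by rewrite mem_rcons inE -e Hk0 orbT.
  + by move=> k' [<-].
  + move=> k' j' o'; rewrite /add_good; case: eqP => [e|_]; last exact: Hown.
    by move: o'; rewrite e okk.
  + move=> fi k'; rewrite /add_good /=; case: (eqVneq k' k) => [_|_]; last exact: Hfree.
    have h := Hall i fi; have h2 := @gadd g gr.
    rewrite /bval in h *; rewrite big_rcons /=; lra.
- move=> s k j _ ck fj aj _ I; apply: assign_inv => //.
  by case: I => _ _ Hcur _ _; exact: Hcur.
Qed.

Lemma reach_inv s s' : reach m v delta s s' -> Inv s -> Inv s'.
Proof. elim => // s0 s1 s2 st _ IH I; apply: IH; exact: step_inv st I. Qed.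

Lemma pick s B j : agent_free s j -> alpha <= bval m v j B ->
  exists j', [/\ agent_free s j', alpha <= bval m v j' B & pref m v delta s B j'].
Proof.
move=> fj aj.
case: (classic (exists j0, [/\ j0 \in N11 m v delta, agent_free s j0 &
   alpha <= bval m v j0 B])) => [[j0 [H1 H2 H3]]|H].
  by exists j0; split => //; left.
by exists j; split => //; right.
Qed.


Lemma final_contra s : Inv s -> final m v delta s -> agent_free s i -> False.
Proof.
move=> [Hc Hinj Hcur Hown Hfree] fin fi.
have h1 : 3 / 4 + delta <= 1 :> R by have hd := Hd; lra.
case ph: (phase2 s); last first.
  have nph : ~~ phase2 s by rewrite ph.
  case: (classic (exists k j, [/\ owner s k = None, agent_free s j &
     alpha <= bval m v j (bags s k)])) => [[k [j [ok fj aj]]]|H].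
    have [j' [fj' aj' pj']] := @pick s _ j fj aj.
    exact: (fin _ (p1_assign nph ok fj' aj' pj')).
  apply: (fin _ (p1_end nph _)) => k j ok fj; rewrite ltNge; apply/negP => aj.
  by apply: H; exists k, j; split.
case cs: (cur s) => [k|].
  case: (classic (exists j, agent_free s j /\ alpha <= bval m v j (bags s k)))
    => [[j [fj aj]]|H].
    have [j' [fj' aj' pj']] := @pick s _ j fj aj.
    exact: (fin _ (p2_assign ph cs fj' aj' pj')).
  have Hlt : forall j, agent_free s j -> bval m v j (bags s k) < alpha.
    by move=> j fj; rewrite ltNge; apply/negP => aj; apply: H; exists j.
  case: (classic (exists g, unused m s g)) => [[g ug]|Hu].
    exact: (fin _ (p2_add ph cs Hlt ug)).
  have cover : forall g, (0 < g <= m)%N -> exists k', g \in bags s k'.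
    move=> g /andP[g0 gm]; case: (leqP g (2 * n)) => g2.
      by apply: Hc; rewrite g0 g2.
    apply: NNPP => Hn; apply: Hu; exists g; split; first by rewrite g2 gm.
    by move=> k'; apply/negP => Hk; apply: Hn; exists k'.
  have S1 : n%:R <= \sum_k bval m v i (bags s k).
    rewrite -(total i).
    apply: le_trans (_ : \sum_(g < m.+1)
        (\sum_k (nat_of_ord g \in bags s k)%:R) * gval m v i g <= _).
      apply: ler_sum => g _.
      have [gz|gpos] := eqVneq (nat_of_ord g) 0%N.
        by rewrite /gval gz /= mulr0.
      have [k' Hk'] := cover g ltac:(rewrite lt0n gpos /= -ltnS ltn_ord //).
      apply: ler_peMl; first exact: gval_ge0.
      rewrite (bigD1 k') //= Hk' lerDl; apply: sumr_ge0 => ? _; exact: ler0n.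
    under eq_bigr do rewrite mulr_suml.
    rewrite exchange_big /=; apply: ler_sum => k' _.
    exact: cover_sum (gval_ge0 i) _.
  have S2 : \sum_k bval m v i (bags s k) < n%:R.
    have -> : n%:R = \sum_(k' : 'I_n) (1:R) by rewrite sumr_const card_ord.
    rewrite (bigD1 k) //= [X in _ < X](bigD1 k) //=.
    apply: ltr_leD.
      have := Hlt i fi; rewrite /alpha_of => h; exact: (lt_le_trans h h1).
    by apply: ler_sum => k' _; exact: Hfree fi k'.
  by have := le_lt_trans S1 S2; rewrite ltxx.
case: (classic (exists k, owner s k = None)) => [[k ok]|H].
  exact: (fin _ (@p2_select R n m v delta s k ph cs ok)).
have own : forall k, exists j, owner s k = Some j.
  move=> k; case e: (owner s k) => [j|]; first by exists j.
  by case: H; exists k.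
pose f k := odflt i (owner s k).
have finj : injective f.
  move=> k1 k2; rewrite /f.
  have [j1 e1] := own k1; have [j2 e2] := own k2; rewrite e1 e2 /= => e.
  by apply: (Hinj _ _ j1) => //; rewrite e2 e.
have [g fK gK] := injF_bij finj.
have [j e] := own (g i).
have := gK i; rewrite /f e /= => ej.
by apply: (fi (g i)); rewrite e ej.
Qed.

End Main.

Theorem lemma23 (R : realFieldType) (n m : nat) (v : 'I_n -> nat -> R) (delta : R) :
  delta <= 1 / 4 ->
  nonneg_vals v ->
  ONI m v delta ->
  (#|N11 m v delta|%:R <= n%:R * (1 / 4 - delta) / (1 / 4 + delta / 3)) ->
  forall s : state n,
    reach m v delta (init_state n) s -> final m v delta s ->
    forall i, i \in N12 m v delta ->
      exists k, owner s k = Some i /\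
                alpha_of delta * MMS m v i <= bval m v i (bags s k).
Proof.
move=> Hd Hnn Honi _ s Hr Hf i Hi.
have I := reach_inv Hd Hnn Honi Hi Hr (Inv_init Hd Hi).
case: (classic (exists k, owner s k = Some i)) => [[k ok]|H].
  exists k; split => //; rewrite (MMS1 i Honi) mulr1.
  by case: I => _ _ _ Hown _; exact: Hown k i ok.
exfalso; apply: (final_contra Hd Hnn Honi I Hf) => k ok; apply: H; by exists k.
Qed.
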